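(* Let $G$ be a labeled complete bipartite graph with partite sets $V_1,V_2$, let $0<\gamma<\alpha<1/2$, and let $x$ be a fractional clustering of $G$. Run the following algorithm: set $S=V(G)$; while $V_1\cap S\ne\emptyset$, for each $u\in V_1\cap S$ let $T_u=\{w\in S\setminus\{u\}:x_{uw}\le\alpha\}$ and $T^*_u=\{w\in V_2\cap S:x_{uw}\le\gamma\}$, choose a pivot $u\in V_1\cap S$ maximizing $|T^*_u|$, let $T=T_u$, and if $\sum_{w\in V_2\cap T}x_{uw}\ge\alpha|V_2\cap T|/2$ output $\{u\}$ and remove $u$ from $S$, otherwise output $C=\{u\}\cup T$ and remove $C$ from $S$. Consider any iteration in which $C=\{u\}\cup T$ is output (i.e. $\sum_{w\in V_2\cap T}x_{uw}<\alpha|V_2\cap T|/2$), and let $S$ denote the set of remaining vertices at the start of that iteration. Then for every $z\in (V_1\cap S)\setminus C$, \[ \bigl|N^+(z)\cap C\bigr| \le \max\left\{\tfrac{1}{1-2\alpha},\tfrac{2}{\alpha}\right\}\left(\sum_{w\in N^+(z)\cap C}x_{zw}+\sum_{w\in N^-(z)\cap C}(1-x_{zw})\right). \]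
   Context: A fractional clustering of $G$ is a vector $x$ indexed by all unordered pairs of distinct vertices of $G$ with $x_{uv}\in[0,1]$ and $x_{vz}\le x_{vw}+x_{wz}$ for all distinct $v,w,z$; $x_{uu}=0$. $N^+(z)$, $N^-(z)$ are the sets of vertices joined to $z$ by a $+$ edge, resp. $-$ edge (for $z\in V_1$ these lie in $V_2$). (In the paper's terminology: the left side is the total cluster-cost and the sum on the right the total LP-cost of the edges from $z$ to the cluster $C$.) *)

(* Defs.v *)
From HB Require Import structures.
From mathcomp Require Import all_boot all_order all_algebra.
Set Implicit Arguments. Unset Strict Implicit. Unset Printing Implicit Defensive.
Import Order.TTheory GRing.Theory Num.Theory.
Local Open Scope ring_scope.

Section Clustering.
Variables (R : realFieldType) (V : finType).

Definition fractional_clustering (x : V -> V -> R) : Prop :=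
  [/\ forall u v, x u v = x v u,
      forall u, x u u = 0,
      forall u v, u != v -> 0 <= x u v <= 1
    & forall v w z, v != w -> w != z -> v != z -> x v z <= x v w + x w z].

Definition T_set (x : V -> V -> R) (alpha : R) (S : {set V}) (u : V) : {set V} :=
  [set w in S | (w != u) && (x u w <= alpha)].

Definition Tstar_set (x : V -> V -> R) (gamma : R) (V2 S : {set V}) (u : V)
  : {set V} :=
  [set w in V2 :&: S | x u w <= gamma].

Definition is_pivot (x : V -> V -> R) (gamma : R) (V1 V2 S : {set V}) (u : V)
  : Prop :=
  u \in V1 :&: S /\
  (forall v, v \in V1 :&: S ->
     #|Tstar_set x gamma V2 S v| <= #|Tstar_set x gamma V2 S u|)%N.

Definition singleton_case (x : V -> V -> R) (alpha : R) (V2 T : {set V}) (u : V)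
  : bool :=
  alpha * #|V2 :&: T|%:R / 2 <= \sum_(w in V2 :&: T) x u w.

(* The sets S of remaining vertices that can occur at the start of some
   iteration of some run of the (nondeterministic) algorithm. *)
Inductive reachable (x : V -> V -> R) (alpha gamma : R) (V1 V2 : {set V})
  : {set V} -> Prop :=
| reach_init : reachable x alpha gamma V1 V2 [set: V]
| reach_single : forall S u,
    reachable x alpha gamma V1 V2 S ->
    is_pivot x gamma V1 V2 S u ->
    singleton_case x alpha V2 (T_set x alpha S u) u ->
    reachable x alpha gamma V1 V2 (S :\ u)
| reach_cluster : forall S u,
    reachable x alpha gamma V1 V2 S ->
    is_pivot x gamma V1 V2 S u ->
    ~~ singleton_case x alpha V2 (T_set x alpha S u) u ->
    reachable x alpha gamma V1 V2 (S :\: (u |: T_set x alpha S u)).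

End Clustering.

(* Main.v *)
Require Import Defs.
From HB Require Import structures.
From mathcomp Require Import all_boot all_order all_algebra.
From mathcomp Require Import ring lra.
Import Order.TTheory GRing.Theory Num.Theory.
Local Open Scope ring_scope.

Theorem lemma6 (R : realFieldType) (V : finType) (V1 V2 : {set V})
  (plus : V -> V -> bool) (x : V -> V -> R) (alpha gamma : R)
  (S : {set V}) (u z : V) :
  V1 :&: V2 = set0 -> V1 :|: V2 = [set: V] ->
  (forall a b, plus a b = plus b a) ->
  0 < gamma -> gamma < alpha -> alpha < 1 / 2 ->
  fractional_clustering x ->
  reachable x alpha gamma V1 V2 S ->
  is_pivot x gamma V1 V2 S u ->
  ~~ singleton_case x alpha V2 (T_set x alpha S u) u ->
  let C := u |: T_set x alpha S u in
  let Nplus := [set w in V2 | plus z w] in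
  let Nminus := [set w in V2 | ~~ plus z w] in
  z \in (V1 :&: S) :\: C ->
  #|Nplus :&: C|%:R <=
    Num.max (1 / (1 - 2 * alpha)) (2 / alpha) *
    (\sum_(w in Nplus :&: C) x z w + \sum_(w in Nminus :&: C) (1 - x z w)).
Proof.
move=> H12 _ _ g0 ga a2 [xs x0 x01 xtri] _ [uV1S _] nsing C Np Nm zin.
set T := T_set x alpha S u.
set A := V2 :&: T.
set P := Np :&: C. set M := Nm :&: C.
have uV1 : u \in V1 by move: uV1S; rewrite inE => /andP[].
have zV1 : z \in V1 by move: zin; rewrite !inE => /andP[_ /andP[]].
have zS : z \in S by move: zin; rewrite !inE => /andP[_ /andP[]].
have zC : z \notin C by move: zin; rewrite !inE => /andP[].
have V2nu : forall w, w \in V2 -> w != u.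
  move=> w wV2; apply/eqP => ewu; have : u \in V1 :&: V2 by rewrite inE uV1 -ewu.
  by rewrite H12 inE.
have V2nz : forall w, w \in V2 -> w != z.
  move=> w wV2; apply/eqP => ewu; have : z \in V1 :&: V2 by rewrite inE zV1 -ewu.
  by rewrite H12 inE.
have zu : z != u by apply/eqP => e; move: zC; rewrite /C e !inE eqxx.
have hP : forall w, (w \in P) = (w \in A) && plus z w.
  move=> w; rewrite /P /A /C /Np !inE.
  case wV2: (w \in V2) => //=; rewrite (negbTE (V2nu w wV2)) /=.
  by rewrite andbC.
have hM : forall w, (w \in M) = (w \in A) && ~~ plus z w.
  move=> w; rewrite /M /A /C /Nm !inE.
  case wV2: (w \in V2) => //=; rewrite (negbTE (V2nu w wV2)) /=.
  by rewrite andbC.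
have splitA : forall F : V -> R,
   \sum_(w in A) F w = \sum_(w in P) F w + \sum_(w in M) F w.
  move=> F; rewrite (bigID (plus z)) /=.
  by congr (_ + _); apply: eq_bigl => w; rewrite ?hP ?hM.
have inA : forall w, w \in A -> [/\ w \in V2, w != u, w != z & x u w <= alpha].
  move=> w; rewrite /A /T /T_set !inE => /andP[wV2 /andP[_ /andP[wu xw]]].
  by split => //; apply: V2nz.
have PA : forall w, w \in P -> w \in A by move=> w; rewrite hP => /andP[].
have MA : forall w, w \in M -> w \in A by move=> w; rewrite hM => /andP[].
set d := x u z.
have dgt : alpha < d.
  rewrite ltNge; apply/negP => dle; move: zC; rewrite /C /T /T_set !inE.
  rewrite zS zu /d dle /=; by rewrite orbT.
have cardR : forall B : {set V}, #|B|%:R = \sum_(w in B) (1 : R).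
  by move=> B; rewrite sumr_const.
have sumc : forall (B : {set V}) (c : R), \sum_(w in B) c = c * #|B|%:R.
  by move=> B c; rewrite sumr_const mulr_natr.
set p : R := #|P|%:R. set m : R := #|M|%:R.
set sP := \sum_(w in P) x u w. set sM := \sum_(w in M) x u w.
set fP := \sum_(w in P) x z w. set fM := \sum_(w in M) (1 - x z w).
have p0 : 0 <= p by rewrite /p ler0n.
have m0 : 0 <= m by rewrite /m ler0n.
have hfP : d * p - sP <= fP.
  rewrite /p -sumc /sP -sumrB /fP; apply: ler_sum => w /PA /inA [_ wu wz _].
  have uw : u != w by rewrite eq_sym.
  have uz : u != z by rewrite eq_sym.
  have := xtri u w z uw wz uz; rewrite (xs w z).
  rewrite /d; lra.
have hfM : (1 - d) * m - sM <= fM.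
  rewrite /m -sumc /sM -sumrB /fM; apply: ler_sum => w /MA /inA [_ wu wz _].
  have uw : u != w by rewrite eq_sym.
  have zw : z != w by rewrite eq_sym.
  have := xtri z u w zu uw zw; rewrite (xs z u).
  rewrite /d; lra.
have fM0 : 0 <= fM.
  apply: sumr_ge0 => w /MA /inA [_ _ wz _].
  have := x01 z w; rewrite eq_sym wz => /(_ isT) /andP[_]; lra.
have sPle : sP <= alpha * p.
  rewrite /p -sumc /sP; apply: ler_sum => w /PA /inA [_ _ _ ]; done.
have hA : sP + sM < alpha * (p + m) / 2.
  move: nsing; rewrite /singleton_case -/T -/A cardR !splitA -!cardR -/p -/m -/sP -/sM.
  by rewrite -ltNge.
set K := Num.max _ _.
have K1 : 1 / (1 - 2 * alpha) <= K by rewrite le_max lexx.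
have K2 : 2 / alpha <= K by rewrite le_max lexx orbT.
have a0 : 0 < alpha by lra.
have b0 : 0 < 1 - 2 * alpha by lra.
have K1' : 1 <= K * (1 - 2 * alpha).
  by rewrite -ler_pdivrMr // mul1r -[X in X <= _]mul1r.
have K2' : 2 <= K * alpha.
  by rewrite -ler_pdivrMr.
have fP0 : 0 <= fP.
  apply: sumr_ge0 => w /PA /inA [_ _ wz _].
  have := x01 z w; rewrite eq_sym wz => /(_ isT) /andP[]; done.
have tot0 : 0 <= fP + fM by apply: addr_ge0.
have K0 : 0 <= K by apply: le_trans K2; apply: divr_ge0 => //; apply: ltW.
case: (lerP d (1 - alpha / 2)) => hd.
- have : alpha / 2 * p <= fP + fM.
    have : alpha / 2 * p <= (d - alpha / 2) * p by apply: ler_wpM2r => //; lra.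
    have : 0 <= (1 - d - alpha / 2) * m by apply: mulr_ge0 => //; lra.
    lra.
  move=> h.
  have : p * (K * alpha) / 2 <= K * (fP + fM).
    have : K * (alpha / 2 * p) <= K * (fP + fM) by apply: ler_wpM2l.
    set q := K * alpha; have -> : p * q / 2 = K * (alpha / 2 * p) by rewrite /q; ring.
    done.
  have : p * 2 <= p * (K * alpha) by apply: ler_wpM2l.
  lra.
- have h : (1 - 2 * alpha) * p <= fP + fM.
    have : (1 - 2 * alpha) * p <= (d - alpha) * p by apply: ler_wpM2r => //; lra.
    lra.
  have : K * ((1 - 2 * alpha) * p) <= K * (fP + fM) by apply: ler_wpM2l.
  have : p * 1 <= p * (K * (1 - 2 * alpha)) by apply: ler_wpM2l.
  have -> : K * ((1 - 2 * alpha) * p) = p * (K * (1 - 2 * alpha)) by ring.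
  lra.
Qed.
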